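(* Let $G=(V,E)$ be a graph with infinite edge motion and let $\gamma \in \operatorname{Aut} G$. Let $V_{\text{move}} = \{v \in V : \gamma(v) \neq v\}$, and let $C$ be the vertex set of a connected component of the induced subgraph $G[V_{\text{move}}]$. If $C$ is finite, then $C$ contains a vertex of infinite degree in $G$.
   Context: Graphs are simple and may be infinite. An automorphism $\gamma$ acts on edges by $\gamma(uv)=\gamma(u)\gamma(v)$; it moves an edge $e$ if $\gamma(e)\neq e$ as an unordered pair. A graph has infinite edge motion if every non-trivial automorphism moves infinitely many edges. *)

(* Defs.v *)
From Stdlib Require Import List Relations.Relation_Operators.
Import ListNotations.

Definition finite_set {X : Type} (P : X -> Prop) : Prop :=
  exists l : list X, forall x, P x -> In x l.

Definition infinite_set {X : Type} (P : X -> Prop) : Prop := ~ finite_set P.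

Record simple_graph (V : Type) (adj : V -> V -> Prop) : Prop := {
  sg_sym : forall u v, adj u v -> adj v u;
  sg_irrefl : forall v, ~ adj v v }.

Definition is_automorphism {V : Type} (adj : V -> V -> Prop) (g : V -> V) : Prop :=
  (forall x y, g x = g y -> x = y) /\
  (forall y, exists x, g x = y) /\
  (forall u v, adj u v <-> adj (g u) (g v)).

(* g moves the edge uv iff {g u, g v} <> {u, v} as unordered pairs. *)
Definition moves_edge {V : Type} (g : V -> V) (u v : V) : Prop :=
  ~ ((g u = u /\ g v = v) \/ (g u = v /\ g v = u)).

(* The set of edges moved by g, with edges given as (ordered) pairs of adjacent
   vertices; each unordered edge appears twice, which does not affect
   (in)finiteness. *)
Definition moved_edges {V : Type} (adj : V -> V -> Prop) (g : V -> V) : V * V -> Prop :=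
  fun p => adj (fst p) (snd p) /\ moves_edge g (fst p) (snd p).

Definition infinite_edge_motion {V : Type} (adj : V -> V -> Prop) : Prop :=
  forall g, is_automorphism adj g -> (exists v, g v <> v) ->
    infinite_set (moved_edges adj g).

Definition induced_adj {V : Type} (adj : V -> V -> Prop) (M : V -> Prop) : V -> V -> Prop :=
  fun u v => M u /\ M v /\ adj u v.

Definition is_component {V : Type} (adj : V -> V -> Prop) (M : V -> Prop) (C : V -> Prop) : Prop :=
  exists v0, M v0 /\
    forall x, C x <-> (M x /\ clos_refl_trans V (induced_adj adj M) v0 x).

Definition moved_vertices {V : Type} (g : V -> V) : V -> Prop := fun v => g v <> v.

Definition infinite_degree {V : Type} (adj : V -> V -> Prop) (v : V) : Prop :=
  infinite_set (adj v).

(* Main.v *)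
Require Import Defs.
From Stdlib Require Import List Relations.Relation_Operators.
From Stdlib Require Import Classical ClassicalEpsilon.
Import ListNotations.

Lemma rt_iff {V} (R : V -> V -> Prop) (A : V -> Prop)
  (H1 : forall x y, R x y -> A x -> A y) (H2 : forall x y, R x y -> A y -> A x) :
  forall a b, clos_refl_trans V R a b -> (A a <-> A b).
Proof.
  intros a b H; induction H.
  - split; eauto.
  - tauto.
  - tauto.
Qed.

Lemma fin_edges {V} (adj : V -> V -> Prop) (Hs : forall u v, adj u v -> adj v u) :
  forall l, (forall x, In x l -> finite_set (adj x)) ->
  finite_set (fun p : V * V => (In (fst p) l \/ In (snd p) l) /\ adj (fst p) (snd p)).
Proof.
  induction l as [|a l IH]; intros Hf.
  - exists []. intros [x y] [[[]|[]] _].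
  - destruct IH as [L HL]. { intros x Hx; apply Hf; simpl; auto. }
    destruct (Hf a (or_introl eq_refl)) as [Na HNa].
    exists (map (pair a) Na ++ map (fun y => (y, a)) Na ++ L).
    intros [x y] [Hin Hadj]; simpl in *.
    apply in_or_app.
    destruct Hin as [[Hx|Hx]|[Hy|Hy]].
    + subst. left. apply in_map. auto.
    + right. apply in_or_app. right. apply HL. simpl. auto.
    + rewrite <- Hy. right. apply in_or_app. left.
      apply (in_map (fun y0 => (y0, a))). apply HNa. apply Hs. rewrite Hy. auto.
    + right. apply in_or_app. right. apply HL. simpl. auto.
Qed.

Lemma finite_exact {X} (P : X -> Prop) (l : list X) :
  exists l', forall x, In x l' <-> (In x l /\ P x).
Proof.
  induction l as [|a l [l' H]].
  - exists []. simpl. tauto.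
  - destruct (classic (P a)) as [Pa|nPa].
    + exists (a :: l'). intro x. simpl. rewrite H.
      split; [intros [E|[]]; [subst|]; auto | intros [[E|I] Px]; [left|right]; auto].
    + exists l'. intro x. simpl. rewrite H.
      split; [intros [I Px]; auto | intros [[E|I] Px]; [subst; contradiction|auto]].
Qed.

Lemma close {V} (adj : V -> V -> Prop) (Hs : forall u v, adj u v -> adj v u)
  (Hmot : infinite_edge_motion adj) (s : V -> V) (Haut : is_automorphism adj s)
  (v0 : V) (Hv0 : s v0 <> v0) (D : V -> Prop) (Hfix : forall x, ~ D x -> s x = x)
  (HDfin : finite_set D) (Hdeg : forall x, D x -> finite_set (adj x)) : False.
Proof.
  apply (Hmot s Haut (ex_intro _ v0 Hv0)).
  destruct HDfin as [l0 Hl0].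
  destruct (finite_exact D l0) as [l Hl].
  destruct (fin_edges adj Hs l) as [L HL].
  { intros x Hx. apply Hdeg. apply Hl. auto. }
  exists L. intros [x y] [Hadj Hmv]. apply HL. simpl in *. split; auto.
  destruct (classic (D x)) as [Dx|nDx].
  - left. apply Hl. auto.
  - destruct (classic (D y)) as [Dy|nDy].
    + right. apply Hl. auto.
    + exfalso. apply Hmv. left. split; apply Hfix; auto.
Qed.

Theorem mainTheorem1 (V : Type) (adj : V -> V -> Prop)
  (HG : simple_graph V adj)
  (Hmot : infinite_edge_motion adj)
  (g : V -> V) (Hg : is_automorphism adj g)
  (C : V -> Prop) (HC : is_component adj (moved_vertices g) C)
  (Hfin : finite_set C) :
  exists v, C v /\ infinite_degree adj v.
Proof.
  apply NNPP; intro Hno.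
  assert (Hdeg : forall v, C v -> finite_set (adj v)).
  { intros v Hv. apply NNPP. intro Hi. apply Hno. exists v. split; auto. }
  pose proof (sg_sym _ _ HG) as Hs.
  pose proof Hg as Hg'.
  destruct Hg as [Ginj [Gsurj Gadj]].
  destruct HC as [v0 [Mv0 HCdef]].
  unfold moved_vertices in *.
  pose (ginv := fun y => proj1_sig (constructive_indefinite_description _ (Gsurj y))).
  assert (Hginv : forall y, g (ginv y) = y).
  { intro y. unfold ginv. exact (proj2_sig (constructive_indefinite_description _ (Gsurj y))). }
  assert (Hginv2 : forall x, ginv (g x) = x).
  { intro x. apply Ginj. apply Hginv. }
  assert (HCM : forall x, C x -> g x <> x) by (intros x Hx; apply HCdef; auto).
  assert (HCcl : forall x y, C x -> g y <> y -> adj x y -> C y).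
  { intros x y Hx My Hxy. apply HCdef in Hx as [Mx Hr]. apply HCdef. split; auto.
    eapply rt_trans; [exact Hr|]. apply rt_step. repeat split; auto. }
  assert (Mg : forall y, g y <> y -> g (g y) <> g y).
  { intros y H E. apply H. apply Ginj. auto. }
  assert (Mgi : forall w, g (g w) <> g w -> g w <> w).
  { intros w H E. apply H. congruence. }
  assert (L : forall A : V -> Prop, (forall x y, A x -> g y <> y -> adj x y -> A y) ->
             forall c, C c -> A c -> forall x, C x -> A x).
  { intros A HA c Hc Ac x Hx.
    apply HCdef in Hc as [_ Hc]. apply HCdef in Hx as [_ Hx].
    assert (H1 : forall a b, induced_adj adj (fun v => g v <> v) a b -> A a -> A b).
    { intros a b [Ma [Mb Hab]] Ha. eapply HA; eauto. }
    assert (H2 : forall a b, induced_adj adj (fun v => g v <> v) a b -> A b -> A a).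
    { intros a b [Ma [Mb Hab]] Hb. eapply HA; eauto. }
    apply (rt_iff _ A H1 H2 _ _ Hx). apply (rt_iff _ A H1 H2 _ _ Hc). auto. }
  pose (B := fun y => exists u, C u /\ g u = y).
  assert (HBcl : forall x y, B x -> g y <> y -> adj x y -> B y).
  { intros x y [u [Cu E]] My Hxy. subst x. exists (ginv y). split; auto.
    apply (HCcl u); auto.
    - apply Mgi. rewrite Hginv. auto.
    - apply Gadj. rewrite Hginv. auto. }
  assert (HBM : forall x, B x -> g x <> x).
  { intros x [u [Cu E]]. subst. apply Mg. auto. }
  assert (HgB : forall x, C x -> B (g x)) by (intros x Hx; exists x; auto).
  assert (HBinv : forall y, B y -> C (ginv y)).
  { intros y [u [Cu E]]. subst. rewrite Hginv2. auto. }
  assert (HDfin : finite_set (fun x => C x \/ B x)).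
  { destruct Hfin as [l Hl]. exists (l ++ map g l). intros x [Cx|[u [Cu E]]];
      apply in_or_app; [left; auto|right; subst; apply in_map; auto]. }
  assert (HDdeg : forall x, C x \/ B x -> finite_set (adj x)).
  { intros x [Cx|[u [Cu E]]]; [auto|]. subst x.
    destruct (Hdeg u Cu) as [l Hl]. exists (map g l). intros y Hy.
    rewrite <- (Hginv y). apply in_map. apply Hl. apply Gadj. rewrite Hginv. auto. }
  assert (Hv0C : C v0).
  { apply HCdef. split; auto. apply rt_refl. }
  destruct (classic (exists c, C c /\ B c)) as [[c [Cc Bc]]|Hdisj].
  - (* C = B *)
    assert (HCB : forall x, C x -> B x) by (apply (L B HBcl c Cc Bc)).
    assert (HCg : forall x, C x -> C (g x)).
    { destruct Bc as [u0 [Cu0 E0]].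
      apply (L (fun u => C (g u))) with (c := u0).
      - intros x y Hx My Hxy. apply (HCcl (g x)); auto. apply (proj1 (Gadj x y)); auto.
      - auto.
      - rewrite E0. auto. }
    assert (HBC : forall x, B x -> C x) by (intros x [u [Cu E]]; subst; auto).
    pose (s := fun x => if excluded_middle_informative (C x) then g x else x).
    assert (sC : forall x, C x -> s x = g x).
    { intros x Hx. unfold s. destruct (excluded_middle_informative (C x)); tauto. }
    assert (sO : forall x, ~ C x -> s x = x).
    { intros x Hx. unfold s. destruct (excluded_middle_informative (C x)); tauto. }
    apply (close adj Hs Hmot s) with (v0 := v0) (D := fun x => C x \/ B x).
    + split; [|split].
      * intros x y E. destruct (classic (C x)) as [Cx|nCx], (classic (C y)) as [Cy|nCy].
        -- rewrite sC, sC in E; auto.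
        -- rewrite sC, sO in E; auto. exfalso. apply nCy. subst. auto.
        -- rewrite sO, sC in E; auto. exfalso. apply nCx. subst. auto.
        -- rewrite sO, sO in E; auto.
      * intro y. destruct (classic (C y)) as [Cy|nCy].
        -- destruct (HCB y Cy) as [u [Cu E]]. exists u. rewrite sC; auto.
        -- exists y. apply sO; auto.
      * intros u v. destruct (classic (C u)) as [Cu|nCu], (classic (C v)) as [Cv|nCv].
        -- rewrite sC, sC; auto.
        -- rewrite sC, sO; auto. destruct (classic (g v = v)) as [Fv|Mv].
           ++ rewrite <- Fv at 2. auto.
           ++ split; intro H; exfalso; apply nCv; eauto.
        -- rewrite sO, sC; auto. destruct (classic (g u = u)) as [Fu|Mu].
           ++ rewrite <- Fu at 2. auto.
           ++ split; intro H; exfalso; apply nCu; eauto.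
        -- rewrite sO, sO; tauto.
    + rewrite sC; auto.
    + intros x Hx. apply sO. tauto.
    + exact HDfin.
    + exact HDdeg.
  - assert (Hd : forall x, C x -> B x -> False) by (intros x Cx Bx; apply Hdisj; eauto).
    pose (s := fun x => if excluded_middle_informative (C x) then g x
                        else if excluded_middle_informative (B x) then ginv x else x).
    assert (sC : forall x, C x -> s x = g x).
    { intros x Hx. unfold s. destruct (excluded_middle_informative (C x)); tauto. }
    assert (sB : forall x, ~ C x -> B x -> s x = ginv x).
    { intros x H1 H2. unfold s. destruct (excluded_middle_informative (C x)); [tauto|].
      destruct (excluded_middle_informative (B x)); tauto. }
    assert (sO : forall x, ~ C x -> ~ B x -> s x = x).
    { intros x H1 H2. unfold s. destruct (excluded_middle_informative (C x)); [tauto|].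
      destruct (excluded_middle_informative (B x)); tauto. }
    apply (close adj Hs Hmot s) with (v0 := v0) (D := fun x => C x \/ B x).
    + split; [|split].
      * intros x y E.
        destruct (classic (C x)) as [Cx|nCx]; [|destruct (classic (B x)) as [Bx|nBx]];
        (destruct (classic (C y)) as [Cy|nCy]; [|destruct (classic (B y)) as [By|nBy]]).
        all: repeat first [rewrite sC in E by auto | rewrite sB in E by auto
                          | rewrite sO in E by auto].
        all: try solve [auto].
        -- exfalso. apply (Hd (ginv y)); auto. rewrite <- E. auto.
        -- exfalso. apply nBy. rewrite <- E. auto.
        -- exfalso. apply (Hd (ginv x)); auto. rewrite E. auto.
        -- rewrite <- (Hginv x), <- (Hginv y), E. auto.
        -- exfalso. apply nCy. rewrite <- E. auto.
        -- exfalso. apply nBx. rewrite E. auto.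
        -- exfalso. apply nCx. rewrite E. auto.
      * intro y. destruct (classic (C y)) as [Cy|nCy]; [|destruct (classic (B y)) as [By|nBy]].
        -- exists (g y). rewrite sB; auto. intro H. apply (Hd (g y)); auto.
        -- destruct By as [u [Cu E]]. exists u. rewrite sC; auto.
        -- exists y. apply sO; auto.
      * intros u v.
        destruct (classic (C u)) as [Cu|nCu]; [|destruct (classic (B u)) as [Bu|nBu]];
        (destruct (classic (C v)) as [Cv|nCv]; [|destruct (classic (B v)) as [Bv|nBv]]).
        all: repeat first [rewrite (sC u) by auto | rewrite (sB u) by auto
                          | rewrite (sO u) by auto].
        all: repeat first [rewrite (sC v) by auto | rewrite (sB v) by auto
                          | rewrite (sO v) by auto].
        (* C C *)
        -- auto.
        (* C B *)
        -- split; intro H; exfalso.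
           ++ apply nCv. eauto.
           ++ apply (Hd (g u)); auto. apply (HCcl (ginv v)); auto.
        (* C O *)
        -- destruct (classic (g v = v)) as [Fv|Mv].
           ++ rewrite <- Fv at 2. auto.
           ++ split; intro H; exfalso; [apply nCv|apply nBv]; eauto.
        (* B C *)
        -- split; intro H; exfalso.
           ++ apply nCu. eauto.
           ++ apply (Hd (g v)); auto. apply (HCcl (ginv u)); auto.
        (* B B *)
        -- rewrite (Gadj (ginv u)), !Hginv. tauto.
        (* B O *)
        -- destruct (classic (g v = v)) as [Fv|Mv].
           ++ rewrite (Gadj (ginv u)), Hginv, Fv. tauto.
           ++ split; intro H; exfalso; [apply nBv|apply nCv]; eauto.
        (* O C *)
        -- destruct (classic (g u = u)) as [Fu|Mu].
           ++ rewrite <- Fu at 2. auto.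
           ++ split; intro H; exfalso; [apply nCu|apply nBu]; eauto.
        (* O B *)
        -- destruct (classic (g u = u)) as [Fu|Mu].
           ++ rewrite (Gadj u (ginv v)), Hginv, Fu. tauto.
           ++ split; intro H; exfalso; [apply nBu|apply nCu]; eauto.
        (* O O *)
        -- tauto.
    + rewrite sC; auto.
    + intros x Hx. apply sO; tauto.
    + exact HDfin.
    + exact HDdeg.
Qed.
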